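(* Let $H$ be a finite group, $F$ a free group of rank $2$, $G=H\times F$, and let $A$ be a finite group of automorphisms of $G$ acting trivially on $F$, i.e. each $a\in A$ has the form $a(h,f)=(\alpha(h),f)$ for some automorphism $\alpha$ of $H$; put $n=|A|$. Then for every $z\in X$ in the $n$-valued coset group $X=(G,A)$ and every $y\in X$, the growth function $\xi_y(r)$ of the dynamic $T_z$ does not have exponential growth. In particular, for $H=\langle h\rangle$ cyclic of order $3$ and $A=\langle a\rangle$ with $a(h^i,f)=(h^{-i},f)$, the $2$-valued dynamic $T_z$ with $z=\pi((h,e))$ does not have exponential growth.
   Context: Coset group: for a group $G$ and finite $A\le\operatorname{Aut}(G)$ with $|A|=n$, $X=G/A$ is the set of $A$-orbits, $\pi:G\to X$ the projection, with $\pi(g)*\pi(h)=[\pi(g\,a(h)):a\in A]$, extended elementwise to multi-sets. The dynamic is $T_z(y)=y*z$ with iterates $T_z^r(y)=y*z*\dots*z$ ($r$ factors $z$); its growth function at $y$ is $\xi_y(r)=|\operatorname{Set}(T_z^r(y))|$, where $\operatorname{Set}$ gives the set of distinct elements of a multi-set. A function $f$ has exponential growth if $f(r)\ge c^r$ for some $c>1$ and all sufficiently large $r$. *)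

(* Defs.v *)
From HB Require Import structures.
From mathcomp Require Import all_boot all_order all_algebra all_fingroup.
From mathcomp Require Import reals.
Set Implicit Arguments. Unset Strict Implicit. Unset Printing Implicit Defensive.
Import GRing.Theory Num.Theory.

(* A letter is (generator index, inverted?) ; generators x_0, x_1. *)
Definition letter := ('I_2 * bool)%type.
Definition linv (l : letter) : letter := (l.1, ~~ l.2).

Definition wstep (l : letter) (w : seq letter) : seq letter :=
  if w is l' :: w' then (if l' == linv l then w' else l :: w) else [:: l].
Definition wmul (w1 w2 : seq letter) : seq letter := foldr wstep w2 w1.

Fixpoint reduced (w : seq letter) : bool :=
  match w with
  | l :: ((l' :: _) as w') => (l' != linv l) && reduced w'
  | _ => true
  end.

Lemma wstep_reduced l w : reduced w -> reduced (wstep l w).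
Proof.
case: w => [|l' w'] //=.
case: ifP => [_|/negbT ne].
  by case: w' => // l'' w'' /= /andP [].
by move=> H; rewrite /= ne H.
Qed.

Lemma wmul_reduced w1 w2 : reduced w2 -> reduced (wmul w1 w2).
Proof. by elim: w1 => //= l w1 IH H; apply: wstep_reduced; apply: IH. Qed.

Record Fw := FW { fword : seq letter; fwordP : reduced fword }.
HB.instance Definition _ := [isSub for fword].
HB.instance Definition _ := [Equality of Fw by <:].

Definition Fmul (x y : Fw) : Fw := FW (wmul_reduced (fword x) (fwordP y)).
Definition Fone : Fw := @FW [::] isT.

Definition GG (gT : finGroupType) := (gT * Fw)%type.
Definition mulG (gT : finGroupType) (g h : GG gT) : GG gT :=
  ((g.1 * h.1)%g, Fmul g.2 h.2).

(* A is a finite group of automorphisms of G acting trivially on F: it is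
   given by a subgroup of Aut(H); a in A acts by a(h,f) = (a h, f). *)
Definition actG (gT : finGroupType) (a : {perm gT}) (g : GG gT) : GG gT :=
  (a g.1, g.2).

(* X = G/A.  The A-orbit of (h,f) is {(a h, f) | a in A}; we represent it
   canonically by the pair (orbit of h under A, f). *)
Definition XX (gT : finGroupType) := ({set gT} * Fw)%type.
Definition piX (gT : finGroupType) (A : {group {perm gT}}) (g : GG gT) : XX gT :=
  (orbit 'P A g.1, g.2).
Definition repX (gT : finGroupType) (x : XX gT) : GG gT := (repr x.1, x.2).

(* pi(g) * pi(h) = [ pi(g a(h)) : a in A ]  (an n-element multiset, n = |A|) *)
Definition starX (gT : finGroupType) (A : {group {perm gT}}) (x y : XX gT)
  : seq (XX gT) :=
  [seq piX A (mulG (repX x) (actG a (repX y))) | a <- enum A].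

Definition Tz (gT : finGroupType) (A : {group {perm gT}}) (z : XX gT)
  (M : seq (XX gT)) : seq (XX gT) :=
  flatten [seq starX A m z | m <- M].

Definition Tzr (gT : finGroupType) (A : {group {perm gT}}) (z : XX gT)
  (r : nat) (y : XX gT) : seq (XX gT) := iter r (Tz A z) [:: y].

Definition xi (gT : finGroupType) (A : {group {perm gT}}) (z y : XX gT)
  (r : nat) : nat := size (undup (Tzr A z r y)).

Definition exp_growth (R : realType) (f : nat -> nat) : Prop :=
  exists c : R, (1 < c)%R /\ exists N : nat, forall r : nat, (N <= r)%N ->
    (c ^+ r <= (f r)%:R)%R.

Definition Z3 := 'I_3.
Definition inv3 : {perm Z3} := perm (@invg_inj Z3).
Definition A3 : {group {perm Z3}} := <[inv3]>%G.
Definition h3 : Z3 := Ordinal (isT : (1 < 3)%N).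

(* Main.v *)
Require Import Defs.
From HB Require Import structures.
From mathcomp Require Import all_boot all_order all_algebra all_fingroup.
From mathcomp Require Import reals.
From mathcomp Require Import ring lra.
Import Order.TTheory GRing.Theory Num.Theory.

Local Open Scope ring_scope.
Lemma snd_const (gT : finGroupType) (A : {group {perm gT}}) (z y : XX gT) r :
  exists w, forall x, x \in Tzr A z r y -> x.2 = w.
Proof.
elim: r => [|r [w Hw]].
  by exists y.2 => x; rewrite /= inE => /eqP ->.
exists (Fmul w z.2) => x /=.
move=> /flatten_mapP [m Hm] /mapP [a _ ->].
by rewrite /piX /mulG /repX /= (Hw m Hm).
Qed.

Lemma xi_bound (gT : finGroupType) (A : {group {perm gT}}) (z y : XX gT) r :
  (xi A z y r <= #|{set gT}|)%N.
Proof.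
have [w Hw] := @snd_const gT A z y r.
rewrite /xi.
set s := undup _.
have us : uniq s by apply: undup_uniq.
have -> : size s = size (map fst s) by rewrite size_map.
have um : uniq (map fst s).
  rewrite map_inj_in_uniq // => x1 x2 H1 H2 E.
  rewrite mem_undup in H1; rewrite mem_undup in H2.
  case: x1 x2 E H1 H2 => [a1 b1] [a2 b2] /= -> H1 H2.
  by move: (Hw _ H1) (Hw _ H2) => /= -> ->.
move/card_uniqP: um => <-.
exact: max_card.
Qed.

Lemma bern (R : realType) (d : R) r : 0 <= d -> 1 + r%:R * d <= (1 + d) ^+ r.
Proof.
move=> d0; elim: r => [|r IH]; first by rewrite mul0r addr0 expr0.
rewrite exprS.
have h1 : 0 <= r%:R * d by apply: mulr_ge0.
have : (1 + d) * (1 + r%:R * d) <= (1 + d) * (1 + d) ^+ r.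
  by apply: ler_wpM2l => //; lra.
rewrite -natr1.
nra.
Qed.

Lemma not_exp (R : realType) (f : nat -> nat) K :
  (forall r, (f r <= K)%N) -> ~ exp_growth R f.
Proof.
move=> Hf [c [c1 [N HN]]].
set d := c - 1.
have d0 : 0 < d by rewrite /d; lra.
set b := Num.bound (K%:R / d).
have Hb := @archi_boundP R (K%:R / d) (divr_ge0 (ler0n _ _) (ltW d0)).
have := HN (N + b)%N (leq_addr _ _).
have Hc : c = 1 + d by rewrite /d; lra.
rewrite Hc => H.
have := @bern R d (N + b)%N (ltW d0).
have := Hf (N + b)%N; rewrite -(ler_nat R) => HK.
have : K%:R < b%:R * d by rewrite -ltr_pdivrMr.
rewrite natrD.
have : 0 <= N%:R * d by apply: mulr_ge0 => //; apply: ltW.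
nra.
Qed.

Theorem mainTheorem9 :
  (forall (R : realType) (gT : finGroupType) (A : {group {perm gT}}),
     A \subset Aut [set: gT] ->
     forall gz gy : GG gT,
       ~ exp_growth R (xi A (piX A gz) (piX A gy)))
  /\
  (forall (R : realType) (gy : GG Z3),
       ~ exp_growth R (xi A3 (piX A3 (h3, Fone)) (piX A3 gy))).
Proof.
split.
  move=> R gT A _ gz gy; apply: (@not_exp R _ #|{set gT}|) => r.
  exact: xi_bound.
move=> R gy; apply: (@not_exp R _ #|{set Z3}|) => r.
exact: xi_bound.
Qed.
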